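(* Let $a_j$ ($j\ge2$) be formal variables and $f(x)=1+\sum_{j\ge2}a_jx^j\in\mathbb C[[x]]$. Then for every $n\ge1$, $$\frac{[x^{n+2}]f^{n+1}}{n+1}=\frac12\sum_{j=1}^{n-1}\frac{[x^{j+1}]f^{j}}{j}\cdot\frac{[x^{n-j+1}]f^{n-j}}{n-j}+\frac{[x^{n+2}]f^{n}}{n},$$ where $[x^N]g$ denotes the coefficient of $x^N$ in $g$. *)

(* Defs.v *)
From mathcomp Require Import all_boot all_order all_algebra.
Set Implicit Arguments. Unset Strict Implicit. Unset Printing Implicit Defensive.
Import GRing.Theory.
Local Open Scope ring_scope.

Definition ftrunc (R : fieldType) (a : nat -> R) (N : nat) : {poly R} :=
  1 + \sum_(2 <= j < N.+1) a j *: 'X^j.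

(* [x^N] f^k ; depends only on the truncation of f to degree <= N. *)
Definition coef_fpow (R : fieldType) (a : nat -> R) (N k : nat) : R :=
  (ftrunc a N ^+ k)`_N.

(* Main.v *)
Require Import Defs.
From mathcomp Require Import all_boot all_order all_algebra.
From mathcomp Require Import zify ring.
Import GRing.Theory.
Local Open Scope ring_scope.

Section Lag.
Variable R : fieldType.
Hypothesis hR : [pchar R] =i pred0.
Variable f : {poly R}.
Hypothesis f0 : f`_0 = 1.

Definition eqc (m : nat) (p q : {poly R}) := forall i, (i <= m)%N -> p`_i = q`_i.

Lemma natr_neq0 k : (k != 0)%N -> (k%:R : R) != 0.
Proof. by move=> hk; have /pcharf0P -> := hR. Qed.

Lemma eqc_trans m p q r : eqc m p q -> eqc m q r -> eqc m p r.
Proof. by move=> h1 h2 i hi; rewrite h1 ?h2. Qed.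
Lemma eqc_sym m p q : eqc m p q -> eqc m q p.
Proof. by move=> h i hi; rewrite h. Qed.
Lemma eqc_le m m' p q : (m' <= m)%N -> eqc m p q -> eqc m' p q.
Proof. by move=> hm h i hi; rewrite h // (leq_trans hi hm). Qed.
Lemma eqc_mul m p p' q q' : eqc m p p' -> eqc m q q' -> eqc m (p * q) (p' * q').
Proof.
move=> hp hq i hi; rewrite !coefM; apply: eq_bigr => j _.
rewrite hp ?hq //; first exact: leq_trans (leq_subr _ _) hi.
exact: leq_trans (leq_ord j) hi.
Qed.
Lemma eqc_exp m p q k : eqc m p q -> eqc m (p ^+ k) (q ^+ k).
Proof. by move=> h; elim: k => [|k IH]; [by [] | rewrite !exprS; apply: eqc_mul]. Qed.
Lemma eqc_sum m (I : finType) (F G : I -> {poly R}) :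
  (forall i, eqc m (F i) (G i)) -> eqc m (\sum_i F i) (\sum_i G i).
Proof. by move=> h i hi; rewrite !coef_sum; apply: eq_bigr => j _; rewrite h. Qed.

Lemma coef0_exp k : (f ^+ k)`_0 = 1.
Proof. by elim: k => [|k IH]; rewrite ?coef1 // exprS coef0M f0 IH mulr1. Qed.

Definition W := f - 'X * f^`().

Lemma Lk r k : (f ^+ r * W)`_k * r.+1%:R = (f ^+ r.+1)`_k * (r.+1%:R - k%:R).
Proof.
rewrite /W mulrBr coefB -exprSr mulrCA coefXM.
case: k => [|k] /=; first by rewrite subr0 subr0.
have H : (f ^+ r * f^`())`_k * r.+1%:R = (f ^+ r.+1)`_k.+1 * k.+1%:R.
  have := coef_deriv (f ^+ r.+1) k; rewrite deriv_exp coefMn /= mulrC => E.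
  by rewrite !mulr_natr E.
rewrite mulrBl H; ring.
Qed.

Lemma eqc_refl m p : eqc m p p. Proof. by []. Qed.
Lemma eqc_scale m c p q : eqc m p q -> eqc m (c *: p) (c *: q).
Proof. by move=> h i hi; rewrite !coefZ h. Qed.

Arguments eqc_trans {m p q r}.
Arguments eqc_sym {m p q}.
Arguments eqc_mul {m p p' q q'}.
Arguments eqc_refl {m}.
Arguments eqc_le {m m' p q}.
Arguments eqc_exp {m p q}.

Lemma lowZ (Z : {poly R}) k : (forall i, (i < k)%N -> Z`_i = 0) -> (f * Z)`_k = Z`_k.
Proof.
move=> hZ; rewrite coefM big_ord_recl subn0 f0 mul1r big1 ?addr0 // => j _.
rewrite hZ ?mulr0 //=; rewrite /bump /=. case: j => j /= hj; lia.
Qed.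

Lemma cancelZ (Z : {poly R}) k : (forall i, (i < k)%N -> (f * Z)`_i = 0) ->
  forall i, (i < k)%N -> Z`_i = 0.
Proof.
elim: k => [//|k IH] h i hi.
have IH' := IH (fun j hj => h j (ltnW (leq_trans hj (leqnn _)))).
case: (ltngtP i k) => hik.
- by apply: IH' hik.
- lia.
- have -> : i = k by lia.
  rewrite -lowZ; first by apply: h.
  exact: IH'.
Qed.

Variable finv : {poly R}.
Let q := 'X * finv.

Lemma comp_wide (G : {poly R}) B : (size G <= B)%N -> G \Po q = \sum_(i < B) G`_i *: q ^+ i.
Proof.
move=> hB; rewrite comp_polyE (big_ord_widen B (fun i => G`_i *: q ^+ i) hB) big_mkcond.
apply: eq_bigr => i _; case: ifP => // /negbT; rewrite -leqNgt => h.
by rewrite nth_default // scale0r.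
Qed.

Lemma compT m (G : {poly R}) : eqc m (f * finv) 1 ->
  eqc m (f ^+ m * (G \Po q)) (\sum_(i < m.+1) G`_i *: ('X^i * f ^+ (m - i))).
Proof.
move=> hinv.
rewrite (@comp_wide G _ (leq_maxl (size G) m.+1)).
rewrite (big_ord_widen (maxn (size G) m.+1) (fun i => G`_i *: ('X^i * f ^+ (m - i))) (leq_maxr _ _)).
rewrite [X in eqc _ _ X]big_mkcond /= mulr_sumr; apply: eqc_sum => i.
case: ifP => hi.
- rewrite -scalerAr; apply: eqc_scale.
  have -> : f ^+ m * q ^+ i = ('X^i * f ^+ (m - i)) * (f * finv) ^+ i.
    rewrite /q !exprMn -{1}(subnK (_ : (i <= m)%N)) ?exprD; last by rewrite -ltnS.
    ring.
  rewrite -[X in eqc _ _ X]mulr1; apply: eqc_mul => //.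
  by rewrite -(expr1n _ i); apply: eqc_exp.
- move=> j hj; rewrite coef0 -scalerAr coefZ /q exprMn mulrCA coefXnM.
  have -> : (j < i)%N by move/negbT: hi; rewrite -leqNgt; lia.
  by rewrite mulr0.
Qed.

Lemma resA m (G : {poly R}) : ((\sum_(i < m) G`_i *: ('X^i * f ^+ (m.-1 - i))) * W)`_m = 0.
Proof.
rewrite mulr_suml coef_sum big1 // => i _.
rewrite -scalerAl coefZ -mulrA coefXnM.
have -> : (m < i)%N = false by case: i => i /= hi; lia.
have := Lk (m.-1 - i) (m - i).
have -> : (m.-1 - i).+1 = (m - i)%N by case: i => i /= hi; lia.
have hnz : (m - i)%N != 0%N by case: i => i /= hi; lia.
rewrite subrr mulr0 => /eqP; rewrite mulf_eq0 (negbTE (@natr_neq0 _ hnz)) orbF.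
by move/eqP ->; rewrite mulr0.
Qed.

Lemma extract m p (G : {poly R}) : (p < m)%N -> eqc m (f * finv) 1 -> eqc m (G \Po q) (finv ^+ p) ->
  G`_m * (m - p)%:R = - (p%:R * (f ^+ (m - p))`_m).
Proof.
move=> hpm hinv hG.
have S1 : eqc m (f ^+ m * (G \Po q)) (f ^+ (m - p)).
  apply: (eqc_trans (eqc_mul (eqc_refl (f ^+ m)) hG)).
  have -> : f ^+ m * finv ^+ p = f ^+ (m - p) * (f * finv) ^+ p.
    rewrite exprMn -{1}(subnK (ltnW hpm)) exprD; ring.
  rewrite -[X in eqc _ _ X]mulr1; apply: eqc_mul => //.
  by rewrite -(expr1n _ p); apply: eqc_exp.
have S2 := eqc_trans (eqc_sym (compT m G hinv)) S1.
set A := \sum_(i < m) G`_i *: ('X^i * f ^+ (m.-1 - i)).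
have hT : \sum_(i < m.+1) G`_i *: ('X^i * f ^+ (m - i)) = f * A + G`_m *: 'X^m.
  rewrite big_ord_recr /= subnn expr0 mulr1 mulr_sumr; congr (_ + _).
  apply: eq_bigr => i _; rewrite -scalerAr mulrCA -exprS.
  by have -> : (m.-1 - i).+1 = (m - i)%N by case: i => i /= hi; lia.
rewrite hT in S2.
set F1 := f ^+ (m - p).-1.
have hF1 : f ^+ (m - p) = f * F1 by rewrite /F1 -exprS prednK // subn_gt0.
rewrite hF1 in S2.
set Z := A - F1.
have hfZ : forall i, (i <= m)%N -> (f * Z)`_i = - (G`_m * (i == m)%:R).
  move=> i hi; have := S2 i hi; rewrite coefD coefZ coefXn /Z mulrBr coefB => <-.
  by rewrite eq_sym; ring.
have Zlow : forall i, (i < m)%N -> Z`_i = 0.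
  apply: cancelZ => i hi; rewrite hfZ ?(ltnW hi) //.
  by rewrite (_ : (i == m) = false) ?mulr0 ?oppr0 //; apply/negbTE; rewrite ltn_eqF.
have Zm : Z`_m = - G`_m by rewrite -lowZ // hfZ // eqxx mulr1.
have ZW : (Z * W)`_m = - G`_m.
  rewrite coefM big_ord_recr /= big1 ?add0r; last first.
    by move=> i _; rewrite Zlow ?mul0r //; case: i.
  rewrite Zm subnn /W coefB coefXM /= f0 subr0 mulr1 //.
have ZW2 : (Z * W)`_m = - (F1 * W)`_m by rewrite /Z mulrBl coefB resA sub0r.
have hL := Lk (m - p).-1 m.
rewrite prednK ?subn_gt0 // -/F1 in hL.
have hg : G`_m = (F1 * W)`_m by apply: oppr_inj; rewrite -ZW ZW2.
rewrite hg hL natrB ?(ltnW hpm) //; ring.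
Qed.

Lemma inv_ex k : exists h, eqc k (f * h) 1.
Proof.
elim: k => [|k [h hh]].
  by exists 1; move=> i; rewrite leqn0 => /eqP ->; rewrite mulr1 f0 coef1.
exists (h + (- (f * h)`_k.+1) *: 'X^(k.+1)) => i hi.
rewrite mulrDr coefD -scalerAr coefZ coefMXn.
case: (ltngtP i k.+1) => hik.
- by rewrite hh // mulr0 addr0.
- lia.
- have -> : i = k.+1 by lia.
  by rewrite subnn f0 mulr1 addrN coef1.
Qed.

Lemma comp_ex (finv0 : finv`_0 = 1) k (P : {poly R}) : exists G, eqc k (G \Po q) P.
Proof.
elim: k => [|k [G hG]].
  exists (P`_0)%:P; move=> i; rewrite leqn0 => /eqP ->.
  by rewrite comp_polyC coefC.
exists (G + (P`_k.+1 - (G \Po q)`_k.+1) *: 'X^(k.+1)) => i hi.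
rewrite comp_polyD comp_polyZ comp_Xn_poly coefD coefZ /q exprMn coefXnM.
case: (ltngtP i k.+1) => hik.
- by rewrite hG // mulr0 addr0.
- lia.
- have h0 : (finv ^+ k.+1)`_0 = 1.
    by elim: (k.+1) => [|j IH]; rewrite ?coef1 // exprS coef0M finv0 IH mulr1.
  have -> : i = k.+1 by lia.
  by rewrite subnn h0 mulr1 addrC subrK.
Qed.
End Lag.
Arguments eqc {R}.
Arguments eqc_trans {R m p q r}.
Arguments eqc_sym {R m p q}.
Arguments eqc_mul {R m p p' q q'}.
Arguments eqc_refl {R m}.
Arguments eqc_le {R m m' p q}.
Arguments eqc_exp {R m p q}.

Lemma tail0 (R : fieldType) (a : nat -> R) lo hi i : (i < lo)%N ->
  (\sum_(lo <= j < hi) a j *: 'X^j : {poly R})`_i = 0.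
Proof.
move=> hi0; rewrite coef_sum big_nat_cond big1 // => j /andP[/andP[hj _] _].
rewrite coefZ coefXn (_ : (i == j) = false) ?mulr0 //.
by apply/negbTE; rewrite neq_ltn (leq_trans hi0 hj).
Qed.

Lemma ftrunc_eqc (R : fieldType) (a : nat -> R) k L : (1 <= k)%N -> (k <= L)%N ->
  eqc k (ftrunc a k) (ftrunc a L).
Proof.
move=> h1 h2 i hi; rewrite /ftrunc [in RHS](@big_cat_nat _ _ _ k.+1) //= ?ltnS // addrA coefD.
by rewrite [in RHS]coefD (@tail0 _ a (k.+1)) ?ltnS // addr0 coefD.
Qed.

Lemma ftrunc0 (R : fieldType) (a : nat -> R) N : (ftrunc a N)`_0 = 1.
Proof. by rewrite /ftrunc coefD tail0 // coef1 addr0. Qed.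
Lemma ftrunc1 (R : fieldType) (a : nat -> R) N : (ftrunc a N)`_1 = 0.
Proof. by rewrite /ftrunc coefD tail0 // coef1 addr0. Qed.

Theorem proposition3p6 (R : fieldType) (hR : [pchar R] =i pred0)
  (a : nat -> R) (n : nat) (hn : (1 <= n)%N) :
  coef_fpow a (n + 2) (n + 1) / (n + 1)%:R =
    2^-1 * \sum_(1 <= j < n)
             ((coef_fpow a (j + 1) j / j%:R) *
              (coef_fpow a (n - j + 1) (n - j) / (n - j)%:R))
    + coef_fpow a (n + 2) n / n%:R.
Proof.
set N := (n + 2)%N.
set f := ftrunc a N.
have f0 : f`_0 = 1 by apply: ftrunc0.
have f1 : f`_1 = 0 by apply: ftrunc1.
have [finv hinv] := @inv_ex R f f0 N.
have finv0 : finv`_0 = 1.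
  by have := hinv 0%N isT; rewrite coef0M f0 mul1r coef1.
have [G hG] := @comp_ex R finv finv0 N finv.
have hcp : forall j, (1 <= j)%N -> (j <= n + 1)%N ->
    coef_fpow a (j + 1) j = (f ^+ j)`_(j + 1).
  move=> j h1 h2; rewrite /coef_fpow.
  have h3 : (1 <= j + 1)%N by lia.
  have h4 : (j + 1 <= N)%N by rewrite /N; lia.
  exact: (eqc_exp j (@ftrunc_eqc R a (j + 1) N h3 h4)).
have hb : forall j, (1 <= j)%N -> (j <= n + 1)%N ->
    coef_fpow a (j + 1) j / j%:R = - G`_(j + 1).
  move=> j h1 h2; rewrite hcp //.
  have hm : (1 < j + 1)%N by lia.
  have hle : (j + 1 <= N)%N by rewrite /N; lia.
  have hG1 : eqc (j + 1) (G \Po ('X * finv)) (finv ^+ 1) by rewrite expr1; apply: eqc_le hle hG.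
  have := @extract R hR f f0 finv (j + 1) 1 G hm (eqc_le hle hinv) hG1.
  rewrite addnK mul1r => E.
  have hj0 : (j%:R : R) != 0 by apply: natr_neq0 => //; lia.
  by rewrite -[(f ^+ j)`_(j + 1)]opprK -E mulNr mulfK.
pose q := 'X * finv.
have hG2 : eqc N ((G ^+ 2) \Po q) (finv ^+ 2).
  by rewrite !expr2 comp_polyM; apply: eqc_mul.
have h2N : (2 < N)%N by rewrite /N; lia.
have E2 := @extract R hR f f0 finv N 2 (G ^+ 2) h2N hinv hG2.
rewrite /N addnK in E2.
have e0 : G`_0 = 1.
  have := @compT R f finv 0 G (eqc_le (isT : (0 <= N)%N) hinv) 0%N isT.
  rewrite expr0 mul1r hG // finv0 big_ord1 /= ?subnn !expr0 ?mulr1 coefZ coef1 ?mulr1.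
  by move=> ->.
have e1 : G`_1 = 0.
  have h1N : (1 <= N)%N by rewrite /N; lia.
  have := @compT R f finv 1 G (eqc_le h1N hinv) 1%N isT.
  rewrite expr1 (eqc_mul (eqc_refl f) (eqc_le h1N hG)) // (eqc_le h1N hinv) //.
  rewrite !big_ord_recr big_ord0 /= add0r !coefD !coefZ /= subn0 subnn expr0 expr1 mulr1 mul1r.
  by rewrite f1 mulr0 add0r coefXn coef1 /= mulr1 => <-.
have hsq : (G ^+ 2)`_(n + 2) = 2 * G`_(n + 2) + \sum_(1 <= j < n) G`_(j + 1) * G`_(n - j + 1).
  rewrite expr2 coefM -(big_mkord xpredT (fun i => G`_i * G`_(n + 2 - i))).
  rewrite (_ : ((n + 2).+1 = n.+3)%N); last by lia.
  rewrite (@big_cat_nat _ _ _ 2 0 n.+3) //.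
  rewrite (@big_cat_nat _ _ _ n.+1 2 n.+3) //; try lia.
  rewrite (@big_ltn _ _ _ 0 2) // (@big_ltn _ _ _ 1 2) // (@big_geq _ _ _ 2 2) //.
  rewrite (@big_ltn _ _ _ n.+1 n.+3) // (@big_ltn _ _ _ n.+2 n.+3) // (@big_geq _ _ _ n.+3 n.+3) //.
  rewrite e1 subn0 subn1 (_ : (n + 2 - n.+1 = 1)%N); last by lia.
  rewrite (_ : (n + 2 - n.+2 = 0)%N); last by lia.
  rewrite e0 e1 /=.
  have -> : \sum_(2 <= i < n.+1) G`_i * G`_(n + 2 - i) = \sum_(1 <= j < n) G`_(j + 1) * G`_(n - j + 1).
    rewrite -(add1n 1) big_addn (_ : (n.+1 - 1 = n)%N) ?subn1 //.
    apply: eq_big_nat => j /andP[h1 h2]; congr (_ * G`_ _); lia.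
  rewrite -[n.+2]addn2; ring.
set S := \sum_(1 <= j < n) G`_(j + 1) * G`_(n - j + 1).
have hL : coef_fpow a N (n + 1) / (n + 1)%:R = - G`_(n + 2).
  have := hb (n + 1)%N (leq_addl _ _) (leqnn _); rewrite -addnA /=.
  by [].
rewrite hL.
rewrite (@eq_big_nat _ _ _ 1 n _ (fun j => G`_(j + 1) * G`_(n - j + 1))); last first.
  move=> j /andP[h1 h2]; rewrite hb ?hb; try lia.
  by rewrite mulrNN.
rewrite -/S.
have hn0 : (n%:R : R) != 0 by apply: natr_neq0 => //; lia.
have h20 : (2 : R) != 0 by apply: (@natr_neq0 _ hR 2).
have hd : coef_fpow a N n = - ((G ^+ 2)`_(n + 2) * n%:R) / 2.
  by rewrite E2 opprK mulrC mulKf.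
rewrite hd hsq.
rewrite -/S; field.
by rewrite hn0 h20.
Qed.
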